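(* Let $k\geq 8$ and $2k+1\leq n\leq 4k$ be integers, and let $h(n,k)=\binom{n-1}{k-1}-\binom{n-k-1}{k-1}+1$. Then \[ \binom{n-2}{k-2}+\binom{n-4}{k-2}+\frac{h(n,k)^2}{\binom{n-2}{k-2}+\binom{n-4}{k-2}}>2\binom{n-1}{k-1}. \] *)

(* Defs.v *)
From mathcomp Require Import all_boot all_order all_algebra.
Set Implicit Arguments. Unset Strict Implicit. Unset Printing Implicit Defensive.

(* h(n,k) = C(n-1,k-1) - C(n-k-1,k-1) + 1, as a natural number
   (the difference is nonnegative since C(.,k-1) is monotone, so truncated
   subtraction is exact). *)
Definition h (n k : nat) : nat := 'C(n - 1, k - 1) - 'C(n - k - 1, k - 1) + 1.

(* Main.v *)
Require Import Defs.
From mathcomp Require Import all_boot all_order all_algebra.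
From mathcomp Require Import zify ring lra.
Import Order.TTheory GRing.Theory Num.Theory.

Lemma bin_ratio (m M j : nat) : m <= M -> 'C(m, j) * M ^ j <= 'C(M, j) * m ^ j.
Proof.
move=> hmM; elim: j => [|j IH]; first by rewrite !bin0.
have e1 := mul_bin_left m j. have e2 := mul_bin_left M j.
have key : (m - j) * M <= (M - j) * m by nia.
rewrite -(leq_pmul2l (ltn0Sn j)) !expnS.
have -> : j.+1 * ('C(m, j.+1) * (M * M ^ j)) = ((m-j) * M) * ('C(m,j) * M^j).
  by rewrite mulnA e1; lia.
have -> : j.+1 * ('C(M, j.+1) * (m * m ^ j)) = ((M-j) * m) * ('C(M,j) * m^j).
  by rewrite mulnA e2; lia.
apply: leq_trans (leq_mul key (leqnn _)) _.
by rewrite leq_mul2l IH orbT.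
Qed.

Lemma ident (N j t a b c d : nat) : N = j + 2 + t ->
  N * b = j * a -> (N-1)*c = (N-j)*b -> (N-2)*d = (N-j-1)*c ->
  (b+d)*(N*(N-1)*(N-2)) = j*a*((N-1)*(N-2)+(N-j)*(N-j-1)).
Proof.
move=> -> .
have -> : j + 2 + t - 1 = j + 1 + t by lia.
have -> : j + 2 + t - 2 = j + t by lia.
have -> : j + 2 + t - j = t + 2 by lia.
have -> : t + 2 - 1 = t + 1 by lia.
move=> e1 e2 e3.
have f1 := congr1 (fun x => x * ((j+1+t)*(j+t))) e1.
have f2 := congr1 (fun x => x * ((j+2+t)*(j+1+t))) e3.
have f3 := congr1 (fun x => x * ((j+2+t)*(t+1))) e2.
have f4 := congr1 (fun x => x * ((t+1)*(t+2))) e1.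
simpl in *. nia.
Qed.
Lemma core (N j a b d r p q num den : nat) :
 7 <= j -> j + 2 <= N ->
 (b+d) * (N * (N-1) * (N-2)) = j * a*((N-1) * (N-2)+(N-j) * (N-j-1)) ->
 r * N^j <= a * (N-j-1)^j ->
 q * (N-j-1) <= p * N -> p <= q -> 0<q ->
 den * (j * ((N-1) * (N-2)+(N-j) * (N-j-1))) <= num * (N * (N-1) * (N-2)) ->
 num <= den -> 0 < den ->
 2 * p^7 * den^2 <= (den-num)^2 * q^7 ->
 (b+d <= a) /\ 2 * a*r <= (a-(b+d))^2.
Proof.
move=> hj hN hid hr hq hpq hq0 hpoly hnd hden hc.
set X := N * (N-1) * (N-2). set Y := (N-1) * (N-2)+(N-j) * (N-j-1).
have X0 : 0 < X by rewrite /X !muln_gt0; apply/andP; split; [apply/andP; split|]; lia.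
have hD : den * (b+d) <= num * a.
  rewrite -(leq_pmul2r X0) -mulnA hid.
  have -> : den * (j * a * Y) = a * (den * (j * Y)) by lia.
  have -> : num * a * X = a * (num * X) by lia.
  by rewrite leq_mul2l hpoly orbT.
have hDa : b + d <= a.
  rewrite -(leq_pmul2l hden); apply: leq_trans hD _; exact: leq_mul.
split=> //.
set D := b + d in hD hDa *.
have hR : r * q^7 <= a * p^7.
  have s1 : r * q^j <= a * p^j.
    have N0 : 0 < N^j by rewrite expn_gt0; lia.
    rewrite -(leq_pmul2r N0).
    apply: leq_trans (_ : r * N^j * q^j <= _); first by rewrite mulnAC.
    apply: leq_trans (leq_mul hr (leqnn (q^j))) _.
    have -> : a * (N-j-1)^j * q^j = a * (q * (N-j-1))^j by rewrite expnMn; lia.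
    have -> : a * p^j * N^j = a * (p * N)^j by rewrite expnMn; lia.
    rewrite leq_mul2l; apply/orP; right.
    by rewrite leq_exp2r ?hq //; lia.
  have qj0 : 0 < q^j by rewrite expn_gt0 hq0.
  rewrite -(leq_pmul2r qj0).
  have e : j = 7 + (j - 7) by lia.
  have := leq_mul s1 (leqnn (q^7)).
  move=> h1; apply: leq_trans (_ : r * q^j * q^7 <= _).
    by rewrite mulnAC.
  apply: leq_trans h1 _.
  rewrite -!mulnA leq_mul2l; apply/orP; right.
  have h7 : p^(j-7) <= q^(j-7) by elim: (j-7) => // i IH; rewrite !expnS leq_mul.
  rewrite e !expnD.
  apply: leq_trans (_ : p^7 * q^7 * p^(j-7) <= _); first by apply: eq_leq; lia.
  apply: leq_trans (_ : p^7 * q^7 * q^(j-7) <= _); first by rewrite leq_mul2l h7 orbT.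
  by apply: eq_leq; lia.
have hE : (den - num) * a <= den * (a - D) by rewrite mulnBr mulnBl leq_sub2l.
have dq0 : 0 < den^2 * q^7 by rewrite muln_gt0 !expn_gt0 hden hq0.
rewrite -(leq_pmul2l dq0).
have s2 : ((den - num) * a)^2 * q^7 <= den^2 * q^7 * (a - D)^2.
  have -> : den ^ 2 * q ^ 7 * (a - D) ^ 2 = (den * (a-D))^2 * q^7 by rewrite expnMn; lia.
  by rewrite leq_mul2r leq_exp2r ?hE ?orbT //; lia.
apply: leq_trans s2.
have -> : ((den - num) * a) ^ 2 * q ^ 7 = a^2 * ((den - num)^2 * q^7) by rewrite expnMn; lia.
apply: leq_trans (leq_mul (leqnn (a^2)) hc).
have := leq_mul (leqnn (2 * a * den^2)) hR.
move=> h; apply: leq_trans (_ : 2 * a * den ^ 2 * (r * q ^ 7) <= _).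
  by apply: eq_leq; lia.
apply: leq_trans h _.
by apply: eq_leq; lia.
Qed.
Lemma poly4 N j : 7 <= j -> N <= 4*j+3 -> 7*j+8 <= 2*N ->
  100 * (j * ((N-1) * (N-2)+(N-j) * (N-j-1))) <= 46 * (N * (N-1) * (N-2)).
Proof.
move=> *.
have [A [B [-> ->]]] : exists A B, j = 1*A + 2*B + 2 /\ N = 4*A + 7*B + 11.
  by exists (2*N - 7*j - 8), (4*j+3-N); lia.
have -> : 4*A + 7*B + 11 - 1 = 4*A + 7*B + 10 by lia.
have -> : 4*A + 7*B + 11 - 2 = 4*A + 7*B + 9 by lia.
have -> : 4*A + 7*B + 11 - (1*A + 2*B + 2) = 3*A + 5*B + 9 by lia.
have -> : 3*A + 5*B + 9 - 1 = 3*A + 5*B + 8 by lia.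
have -> : 46 * ((4*A + 7*B + 11) * (4*A + 7*B + 10) * (4*A + 7*B + 9)) =
  100 * ((1*A + 2*B + 2) * ((4*A + 7*B + 10) * (4*A + 7*B + 9) + (3*A + 5*B + 9) * (3*A + 5*B + 8))) + (13140 + 20278*B + 9220*B*B + 978*B*B*B + 13416*A + 12880*A*B + 2448*A*B*B + 4380*A*A + 1856*A*A*B + 444*A*A*A) by ring.
exact: leq_addr.
Qed.

Lemma poly3 N j : 7 <= j -> 3*j+4 <= N -> 2*N <= 7*j+7 ->
  100 * (j * ((N-1) * (N-2)+(N-j) * (N-j-1))) <= 53 * (N * (N-1) * (N-2)).
Proof.
move=> *.
have [A [B [-> ->]]] : exists A B, j = 2*A + 1*B + 1 /\ N = 7*A + 3*B + 7.
  by exists (N - 3*j - 4), (7*j+7-2*N); lia.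
have -> : 7*A + 3*B + 7 - 1 = 7*A + 3*B + 6 by lia.
have -> : 7*A + 3*B + 7 - 2 = 7*A + 3*B + 5 by lia.
have -> : 7*A + 3*B + 7 - (2*A + 1*B + 1) = 5*A + 2*B + 6 by lia.
have -> : 5*A + 2*B + 6 - 1 = 5*A + 2*B + 5 by lia.
have -> : 53 * ((7*A + 3*B + 7) * (7*A + 3*B + 6) * (7*A + 3*B + 5)) =
  100 * ((2*A + 1*B + 1) * ((7*A + 3*B + 6) * (7*A + 3*B + 5) + (5*A + 2*B + 6) * (5*A + 2*B + 5))) + (5130 + 5513*B + 1786*B*B + 131*B*B*B + 14497*A + 9668*A*B + 1217*A*B*B + 12946*A*A + 3573*A*A*B + 3379*A*A*A) by ring.
exact: leq_addr.
Qed.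

Lemma poly2 N j : 7 <= j -> 5*j+6 <= 2*N -> N <= 3*j+3 ->
  10 * (j * ((N-1) * (N-2)+(N-j) * (N-j-1))) <= 6 * (N * (N-1) * (N-2)).
Proof.
move=> *.
have [A [B [-> ->]]] : exists A B, j = 1*A + 2*B + 0 /\ N = 3*A + 5*B + 3.
  by exists (2*N-5*j-6), (3*j+3-N); lia.
have -> : 3*A + 5*B + 3 - 1 = 3*A + 5*B + 2 by lia.
have -> : 3*A + 5*B + 3 - 2 = 3*A + 5*B + 1 by lia.
have -> : 3*A + 5*B + 3 - (1*A + 2*B + 0) = 2*A + 3*B + 3 by lia.
have -> : 2*A + 3*B + 3 - 1 = 2*A + 3*B + 2 by lia.
have -> : 6 * ((3*A + 5*B + 3) * (3*A + 5*B + 2) * (3*A + 5*B + 1)) =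
  10 * ((1*A + 2*B + 0) * ((3*A + 5*B + 2) * (3*A + 5*B + 1) + (2*A + 3*B + 3) * (2*A + 3*B + 2))) + (36 + 170*B + 300*B*B + 70*B*B*B + 118*A + 400*A*B + 170*A*B*B + 134*A*A + 130*A*A*B + 32*A*A*A) by ring.
exact: leq_addr.
Qed.

Lemma poly1 N j : 7 <= j -> 2*j+2 <= N ->
  10 * (j * ((N-1) * (N-2)+(N-j) * (N-j-1))) <= 7 * (N * (N-1) * (N-2)).
Proof.
move=> *.
have [A [B [-> ->]]] : exists A B, j = 0*A + 1*B + 7 /\ N = 1*A + 2*B + 16.
  by exists (N-2*j-2), (j-7); lia.
have -> : 1*A + 2*B + 16 - 1 = 1*A + 2*B + 15 by lia.
have -> : 1*A + 2*B + 16 - 2 = 1*A + 2*B + 14 by lia.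
have -> : 1*A + 2*B + 16 - (0*A + 1*B + 7) = 1*A + 1*B + 9 by lia.
have -> : 1*A + 1*B + 9 - 1 = 1*A + 1*B + 8 by lia.
have -> : 7 * ((1*A + 2*B + 16) * (1*A + 2*B + 15) * (1*A + 2*B + 14)) =
  10 * ((0*A + 1*B + 7) * ((1*A + 2*B + 15) * (1*A + 2*B + 14) + (1*A + 1*B + 9) * (1*A + 1*B + 8))) + (3780 + 1366*B + 160*B*B + 6*B*B*B + 1498*A + 380*A*B + 24*A*B*B + 175*A*A + 22*A*A*B + 7*A*A*A) by ring.
exact: leq_addr.
Qed.
Local Open Scope ring_scope.
Lemma final (a D r : rat) : 0 < D -> 0 <= r -> r <= a -> 2*a*r <= (a-D)^+2 ->
  2*a < D + (a-r+1)^+2/D.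
Proof.
move=> D0 r0 ra h.
rewrite -(ltr_pM2r D0).
have -> : (D + (a - r + 1) ^+ 2 / D) * D = D*D + (a - r + 1) ^+ 2 by field; rewrite gt_eqF.
nra.
Qed.
Theorem lemma2p9 (k n : nat) (hk : (8 <= k)%N) (hn1 : (2 * k + 1 <= n)%N)
    (hn2 : (n <= 4 * k)%N) :
  let D : rat := ('C(n - 2, k - 2))%:R + ('C(n - 4, k - 2))%:R in
  D + ((h n k)%:R : rat) ^+ 2 / D > 2 * ('C(n - 1, k - 1))%:R.
Proof.
cbv zeta.
have [j ek] : exists j, k = j.+1 by exists k.-1; lia.
have [N en] : exists N, n = N.+1 by exists n.-1; lia.
subst k n. rewrite /h.
have -> : (N.+1 - 2 = N - 1)%N by lia.
have -> : (j.+1 - 2 = j - 1)%N by lia.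
have -> : (N.+1 - 4 = N - 3)%N by lia.
have -> : (N.+1 - 1 = N)%N by lia.
have -> : (j.+1 - 1 = j)%N by lia.
have -> : (N.+1 - j.+1 - 1 = N - j - 1)%N by lia.
have hj : (7 <= j)%N by lia.
have hN1 : (2 * j + 2 <= N)%N by lia.
have hN2 : (N <= 4 * j + 3)%N by lia.
have e1 := mul_bin_diag N (j-1).
have e2 := mul_bin_down (N-1) (j-1).
have e3 := mul_bin_down (N-2) (j-1).
rewrite (_ : ((j-1).+1 = j)%N) in e1; last by lia.
rewrite -subn1 in e1.
rewrite (_ : ((N-1).-1 = N-2)%N) in e2; last by lia.
rewrite (_ : (N-1-(j-1) = N-j)%N) in e2; last by lia.
rewrite (_ : ((N-2).-1 = N-3)%N) in e3; last by lia.
rewrite (_ : (N-2-(j-1) = N-j-1)%N) in e3; last by lia.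
set a := 'C(N, j) in e1 *.
set b := 'C(N-1, j-1) in e1 e2 *.
set c := 'C(N-2, j-1) in e2 e3.
set d := 'C(N-3, j-1) in e3 *.
set r := 'C(N-j-1, j).
have hid := @ident N j (N-j-2)%N a b c d ltac:(lia) e1 e2 e3.
have hr : (r * N ^ j <= a * (N - j - 1) ^ j)%N by apply: bin_ratio; lia.
have hjN : (j + 2 <= N)%N by lia.
have [hDa hsq] : (b + d <= a)%N /\ (2 * a * r <= (a - (b + d)) ^ 2)%N.
  case: (leqP (2*N)%N (5*j+5)%N) => c1.
    by apply: (@core N j a b d r 3%N 5%N 7%N 10%N hj hjN hid hr _ _ _ (@poly1 N j hj ltac:(lia) )); lia.
  case: (leqP N (3*j+3)%N) => c2.
    by apply: (@core N j a b d r 2%N 3%N 6%N 10%N hj hjN hid hr _ _ _ (@poly2 N j hj ltac:(lia) ltac:(lia))); lia.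
  case: (leqP (2*N)%N (7*j+7)%N) => c3.
    by apply: (@core N j a b d r 5%N 7%N 53%N 100%N hj hjN hid hr _ _ _ (@poly3 N j hj ltac:(lia) ltac:(lia))); lia.
  by apply: (@core N j a b d r 3%N 4%N 46%N 100%N hj hjN hid hr _ _ _ (@poly4 N j hj ltac:(lia) ltac:(lia))); lia.
have b0 : (0 < b)%N by rewrite /b bin_gt0; lia.
have hra : (r <= a)%N by rewrite /r /a; apply: leq_bin2l; lia.
have F1 : 0 < (b + d)%:R :> rat by rewrite ltr0n; lia.
have F3 : r%:R <= a%:R :> rat by rewrite ler_nat.
have F4 : 2 * a%:R * r%:R <= (a%:R - (b + d)%:R) ^+ 2 :> rat.
  by rewrite -natrB // -natrX -[2]/(2%:R) -!natrM ler_nat.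
have := @final _ _ _ F1 (ler0n _ r) F3 F4.
move=> H; rewrite natrD in H; rewrite (natrD _ (a - r)) natrB //; exact: H.
Qed.
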